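(* Let $B\in\mathbb{C}^{n\times k}$ with $k\le n$ and $\operatorname{rank}(B)=k$, and let $P_*=B(B^{\mathrm{H}}B)^{-1/2}$ be the unique orthonormal polar factor of $B$. Given $P\in\mathbb{C}^{n\times k}$ with $P^{\mathrm{H}}P=I_k$, let $$\eta=\|B\|_{\mathrm{tr}}-\operatorname{Re}(\operatorname{tr}(P^{\mathrm{H}}B)),\qquad \epsilon=\sqrt{\frac{2\eta}{\sigma_{\min}(B)}}.$$ Then: (a) $$\frac{\|B-P(P^{\mathrm{H}}B)\|_{\mathrm{F}}}{\|B\|_2}\le\|\sin\Theta({\cal R}(P),{\cal R}(P_* ))\|_{\mathrm{F}}\le\epsilon;$$ (b) if $P^{\mathrm{H}}B$ is Hermitian positive definite, then $$\|P-P_*\|_{\mathrm{F}}\le\left(1+\frac{2\|B\|_2}{\sigma_{\min}(B)+\sigma_{\min}(P^{\mathrm{H}}B)}\right)\epsilon;$$ (c) if ${\cal R}(P)={\cal R}(P_* )$, then $\|P-P_*\|_{\mathrm{F}}\le\epsilon$.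
   Context: For a matrix $X$, $X^{\mathrm{H}}$ is its conjugate transpose, ${\cal R}(X)$ its column space, $\|X\|_2$ its largest singular value, $\|X\|_{\mathrm{F}}=\sqrt{\operatorname{tr}(X^{\mathrm{H}}X)}$ its Frobenius norm. For $B\in\mathbb{C}^{n\times k}$ with singular values $\sigma_1(B)\ge\cdots\ge\sigma_k(B)$, $\sigma_{\min}(B)=\sigma_k(B)$ and $\|B\|_{\mathrm{tr}}=\sum_{i=1}^k\sigma_i(B)$ (trace/nuclear norm); $\operatorname{Re}$ denotes the real part. A polar decomposition of $B$ is $B=P\Lambda$ with $P^{\mathrm{H}}P=I_k$ and $\Lambda\succeq0$; $P$ is an orthonormal polar factor. For two $k$-dimensional subspaces ${\cal X}={\cal R}(X)$, ${\cal Y}={\cal R}(Y)$ of $\mathbb{C}^n$ with $X,Y$ having orthonormal columns, the canonical angles are $\theta_i=\arccos\sigma_i(X^{\mathrm{H}}Y)\in[0,\pi/2]$, $i=1,\dots,k$; $\Theta({\cal X},{\cal Y})=\operatorname{diag}(\theta_1,\dots,\theta_k)$ and $\|\sin\Theta({\cal X},{\cal Y})\|_{\mathrm{F}}=\big(\sum_{i=1}^k\sin^2\theta_i\big)^{1/2}$. *)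

(* Defs.v *)
(* complex matrices over an arbitrary numClosedFieldType C
   (e.g. algC, or complex R for a real closed field R). *)
From HB Require Import structures.
From mathcomp Require Import all_boot all_order all_algebra.
From mathcomp Require Import sesquilinear spectral.
Set Implicit Arguments. Unset Strict Implicit. Unset Printing Implicit Defensive.
Import Order.TTheory GRing.Theory Num.Theory Num.Def.
Local Open Scope ring_scope.

Section Defs.
Variable C : numClosedFieldType.

Definition ctmx m n (X : 'M[C]_(m, n)) : 'M[C]_(n, m) := (map_mx conjC X)^T.

Definition hermitian n (A : 'M[C]_n) : Prop := ctmx A = A.

Definition psd n (A : 'M[C]_n) : Prop :=
  hermitian A /\ forall v : 'cV[C]_n, 0 <= (ctmx v *m A *m v) 0 0.
Definition hpd n (A : 'M[C]_n) : Prop :=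
  hermitian A /\ forall v : 'cV[C]_n, v != 0 -> 0 < (ctmx v *m A *m v) 0 0.

Definition orthonormal_cols n k (X : 'M[C]_(n, k)) : Prop := ctmx X *m X = 1%:M.

Definition polar_factor n k (B P : 'M[C]_(n, k)) : Prop :=
  orthonormal_cols P /\ exists Lambda : 'M[C]_k, psd Lambda /\ B = P *m Lambda.

(* singular values of B (n x k): square roots of the k eigenvalues (with
   multiplicity) of the Hermitian PSD matrix B^H B, listed in the order given
   by its spectral (unitary) diagonalization. *)
Definition sv n k (B : 'M[C]_(n, k)) (i : 'I_k) : C :=
  sqrtC (spectral_diag (ctmx B *m B) 0 i).

Definition norm2 n k (B : 'M[C]_(n, k)) : C := \big[Order.max/0]_i sv B i.

Definition smin n k (B : 'M[C]_(n, k)) : C := \big[Order.min/norm2 B]_i sv B i.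

Definition trnorm n k (B : 'M[C]_(n, k)) : C := \sum_i sv B i.

Definition frob m n (X : 'M[C]_(m, n)) : C := sqrtC (\tr (ctmx X *m X)).

(* ||sin Theta(R(X), R(Y))||_F for X, Y with orthonormal columns:
   cos theta_i = sigma_i(X^H Y), so sin^2 theta_i = 1 - sigma_i(X^H Y)^2. *)
Definition sinThetaF n k (X Y : 'M[C]_(n, k)) : C :=
  sqrtC (\sum_i (1 - sv (ctmx X *m Y) i ^+ 2)).

Definition same_range n k (X Y : 'M[C]_(n, k)) : Prop := (X^T == Y^T)%MS.

End Defs.

(* Main.v *)
Require Import Defs.
From HB Require Import structures.
From mathcomp Require Import all_boot all_order all_algebra.
From mathcomp Require Import sesquilinear spectral.
From mathcomp Require Import ring.
Import Order.TTheory GRing.Theory Num.Theory Num.Def.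
Local Open Scope ring_scope.
Local Open Scope sesquilinear_scope.
Set Implicit Arguments. Unset Strict Implicit. Unset Printing Implicit Defensive.

Section H.
Variable C : numClosedFieldType.
Implicit Types m n p k : nat.

Lemma ctmxE m n (X : 'M[C]_(m, n)) i j : ctmx X i j = (X j i)^*.
Proof. by rewrite /ctmx !mxE. Qed.

Lemma ctmx_mul m n p (A : 'M[C]_(m, n)) (B : 'M[C]_(n, p)) :
  ctmx (A *m B) = ctmx B *m ctmx A.
Proof. by rewrite /ctmx map_mxM trmx_mul. Qed.

Lemma ctmxK m n (A : 'M[C]_(m, n)) : ctmx (ctmx A) = A.
Proof. by apply/matrixP => i j; rewrite !ctmxE conjCK. Qed.

Lemma ctmxD m n (A B : 'M[C]_(m, n)) : ctmx (A + B) = ctmx A + ctmx B.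
Proof. by apply/matrixP => i j; rewrite [RHS]mxE !ctmxE mxE rmorphD. Qed.

Lemma ctmxN m n (A : 'M[C]_(m, n)) : ctmx (- A) = - ctmx A.
Proof. by apply/matrixP => i j; rewrite [RHS]mxE !ctmxE mxE rmorphN. Qed.

Lemma ctmxB m n (A B : 'M[C]_(m, n)) : ctmx (A - B) = ctmx A - ctmx B.
Proof. by rewrite ctmxD ctmxN. Qed.

Lemma ctmx1 n : ctmx (1%:M : 'M[C]_n) = 1%:M.
Proof. by rewrite /ctmx map_mx1 trmx1. Qed.

Lemma ctmx_tstar n (A : 'M[C]_n) : A ^t* = ctmx A.
Proof. by rewrite /ctmx map_trmx. Qed.

Lemma ctmx_mul_diag m n (A : 'M[C]_(m, n)) i :
  (ctmx A *m A) i i = \sum_j (A j i)^* * A j i.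
Proof. by rewrite mxE; apply: eq_bigr => j _; rewrite ctmxE. Qed.

Lemma ctmx_mul_diag_ge0 m n (A : 'M[C]_(m, n)) i : 0 <= (ctmx A *m A) i i.
Proof.
rewrite ctmx_mul_diag; apply: sumr_ge0 => j _.
by rewrite mulrC mul_conjC_ge0.
Qed.

Lemma ftr_ge0 m n (A : 'M[C]_(m, n)) : 0 <= \tr (ctmx A *m A).
Proof. by apply: sumr_ge0 => i _; exact: ctmx_mul_diag_ge0. Qed.

Lemma cv_norm_eq0 m (v : 'cV[C]_m) : (ctmx v *m v) 0 0 = 0 -> v = 0.
Proof.
rewrite ctmx_mul_diag => /eqP; rewrite psumr_eq0 => [/allP H|j _]; last first.
  by rewrite mulrC mul_conjC_ge0.
apply/matrixP => j i; rewrite ord1 mxE.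
have := H j (mem_index_enum j); rewrite mulrC mul_conjC_eq0.
by move/eqP.
Qed.

Lemma entry_sandwich m n (A : 'M[C]_(m, n)) (B : 'M[C]_n) i :
  (A *m B *m ctmx A) i i = (row i A *m B *m ctmx (row i A)) 0 0.
Proof.
rewrite -row_mul !mxE; apply: eq_bigr => j _; rewrite !ctmxE !mxE.
by [].
Qed.

Lemma unitary_both n (U : 'M[C]_n) : U \is unitarymx ->
  U *m ctmx U = 1%:M /\ ctmx U *m U = 1%:M.
Proof.
move=> Uu; have Uunit := unitarymx_unit Uu.
split; first by rewrite -ctmx_tstar; apply/unitarymxP.
by rewrite -ctmx_tstar -invmx_unitary // mulVmx.
Qed.

Lemma spec_facts m k (X : 'M[C]_(m, k)) :
  let G := ctmx X *m X in let U := spectralmx G in let d := spectral_diag G in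
  [/\ U *m ctmx U = 1%:M, ctmx U *m U = 1%:M, G = ctmx U *m diag_mx d *m U
    & forall i, d 0 i = (ctmx (X *m ctmx (row i U)) *m (X *m ctmx (row i U))) 0 0].
Proof.
move=> G U d.
have [UU1 UU2] := unitary_both (spectral_unitarymx G).
have Gn : G \is normalmx.
  by apply/normalmxP; rewrite ctmx_tstar /G ctmx_mul ctmxK.
have GE : G = ctmx U *m diag_mx d *m U.
  by rewrite -ctmx_tstar -invmx_unitary ?spectral_unitarymx //; exact/orthomx_spectralP.
split => // i.
have -> : d 0 i = (U *m G *m ctmx U) i i.
  by rewrite GE !mulmxA UU1 mul1mx -mulmxA UU1 mulmx1 mxE eqxx mulr1n.
by rewrite entry_sandwich ctmx_mul ctmxK /G !mulmxA.
Qed.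

Lemma min_real (x y : C) : x \is Num.real -> y \is Num.real ->
  [/\ Order.min x y <= x, Order.min x y <= y & Order.min x y \is Num.real].
Proof.
move=> xr yr; rewrite /Order.min; case: ifP => xy.
  by rewrite lexx (ltW xy).
by rewrite lexx; move: xy; rewrite real_ltNge // => /negbFE ->.
Qed.

Lemma max_real (x y : C) : x \is Num.real -> y \is Num.real ->
  [/\ x <= Order.max x y, y <= Order.max x y & Order.max x y \is Num.real].
Proof.
move=> xr yr; rewrite /Order.max; case: ifP => xy.
  by rewrite lexx (ltW xy).
by rewrite lexx; move: xy; rewrite real_ltNge // => /negbFE ->.
Qed.

Lemma bigmin_props k (F : 'I_k -> C) x0 : x0 \is Num.real ->
  (forall i, F i \is Num.real) ->
  \big[Order.min/x0]_j F j \is Num.real /\ forall i, \big[Order.min/x0]_j F j <= F i.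
Proof.
move=> x0r Fr.
have R : forall (P : pred 'I_k), \big[Order.min/x0]_(j | P j) F j \is Num.real.
  move=> P; apply: (big_ind (fun x => x \is Num.real)) => // x y xr yr.
  by case: (min_real xr yr).
split; first exact: R.
move=> i; move: (mem_index_enum i).
elim: (index_enum _) => [//|a r IH]; rewrite inE big_cons.
have Rr : \big[Order.min/x0]_(j <- r) F j \is Num.real.
  by apply: (big_ind (fun x => x \is Num.real)) => // x y xr yr; case: (min_real xr yr).
case: (min_real (Fr a) Rr) => h1 h2 _.
case/orP => [/eqP ->|/IH h] //; exact: le_trans h2 h.
Qed.

Lemma bigmax_props k (F : 'I_k -> C) x0 : x0 \is Num.real ->
  (forall i, F i \is Num.real) ->
  \big[Order.max/x0]_j F j \is Num.real /\ forall i, F i <= \big[Order.max/x0]_j F j.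
Proof.
move=> x0r Fr.
have R : forall (P : pred 'I_k), \big[Order.max/x0]_(j | P j) F j \is Num.real.
  move=> P; apply: (big_ind (fun x => x \is Num.real)) => // x y xr yr.
  by case: (max_real xr yr).
split; first exact: R.
move=> i; move: (mem_index_enum i).
elim: (index_enum _) => [//|a r IH]; rewrite inE big_cons.
have Rr : \big[Order.max/x0]_(j <- r) F j \is Num.real.
  by apply: (big_ind (fun x => x \is Num.real)) => // x y xr yr; case: (max_real xr yr).
case: (max_real (Fr a) Rr) => h1 h2 _.
case/orP => [/eqP ->|/IH h] //; exact: le_trans h h2.
Qed.

Lemma d_ge0 m k (X : 'M[C]_(m, k)) i : 0 <= spectral_diag (ctmx X *m X) 0 i.
Proof. by case: (spec_facts X) => _ _ _ ->; exact: ctmx_mul_diag_ge0. Qed.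

Lemma sv_ge0 m k (X : 'M[C]_(m, k)) i : 0 <= sv X i.
Proof. by rewrite /sv sqrtC_ge0 d_ge0. Qed.

Lemma sv_real m k (X : 'M[C]_(m, k)) i : sv X i \is Num.real.
Proof. exact: ger0_real (sv_ge0 X i). Qed.

Lemma sv_sq m k (X : 'M[C]_(m, k)) i : sv X i ^+ 2 = spectral_diag (ctmx X *m X) 0 i.
Proof. exact: sqrtCK. Qed.

Lemma sum_sv_sq m k (X : 'M[C]_(m, k)) : \sum_i sv X i ^+ 2 = \tr (ctmx X *m X).
Proof.
under eq_bigr do rewrite sv_sq.
case: (spec_facts X) => UU1 UU2 GE _.
by rewrite {2}GE mxtrace_mulC mulmxA UU1 mul1mx mxtrace_diag.
Qed.

Lemma norm2_ge0 m k (X : 'M[C]_(m, k)) : 0 <= norm2 X.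
Proof.
rewrite /norm2; apply: (big_ind (fun x => 0 <= x)) => //; last by move=> i _; exact: sv_ge0.
by move=> x y x0 y0; rewrite /Order.max; case: ifP.
Qed.

Lemma norm2_ge m k (X : 'M[C]_(m, k)) i : sv X i <= norm2 X.
Proof. by case: (@bigmax_props k (sv X) 0 (real0 _) (sv_real X)) => _ ->. Qed.

Lemma smin_ge0 m k (X : 'M[C]_(m, k)) : 0 <= smin X.
Proof.
rewrite /smin; apply: (big_ind (fun x => 0 <= x)); first exact: norm2_ge0.
  by move=> x y x0 y0; rewrite /Order.min; case: ifP.
by move=> i _; exact: sv_ge0.
Qed.

Lemma smin_le m k (X : 'M[C]_(m, k)) i : smin X <= sv X i.
Proof.
have n2r : norm2 X \is Num.real by exact: ger0_real (norm2_ge0 X).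
by case: (@bigmin_props k (sv X) _ n2r (sv_real X)) => _ ->.
Qed.

Lemma rank_d_gt0 m k (X : 'M[C]_(m, k)) i : \rank X = k ->
  0 < spectral_diag (ctmx X *m X) 0 i.
Proof.
move=> rk; rewrite lt_def d_ge0 andbT.
case: (spec_facts X) => UU1 UU2 _ ->.
apply/eqP => /cv_norm_eq0 H.
have rf : row_free X^T by rewrite /row_free mxrank_tr rk.
have : (row i (spectralmx (ctmx X *m X))) = 0.
  rewrite -[row _ _]ctmxK.
  have -> : ctmx (row i (spectralmx (ctmx X *m X))) = 0.
    apply: trmx_inj; apply: (row_free_inj rf).
    by rewrite trmx0 mul0mx -trmx_mul H trmx0.
  by apply/matrixP => a b; rewrite ctmxE !mxE conjC0.
move/(congr1 (fun M => M *m ctmx (spectralmx (ctmx X *m X)))).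
rewrite -row_mul UU1 mul0mx => /rowP /(_ i).
by rewrite !mxE eqxx /= => /eqP; rewrite oner_eq0.
Qed.

Lemma diag_delta k (d : 'rV[C]_k) j :
  diag_mx d *m delta_mx j 0 = d 0 j *: (delta_mx j 0 : 'cV_k).
Proof.
apply/matrixP => i l; rewrite mul_diag_mx !mxE.
by case: (eqVneq i j) => [->|ne]; rewrite ?mulr1 ?mulr0.
Qed.

Lemma mul_delta_entry m k (A : 'M[C]_(m, k)) i j :
  (A *m (delta_mx j 0 : 'cV_k)) i 0 = A i j.
Proof. by rewrite -colE mxE. Qed.

Lemma sv_gt0 m k (X : 'M[C]_(m, k)) i : \rank X = k -> 0 < sv X i.
Proof. by move=> rk; rewrite /sv sqrtC_gt0 rank_d_gt0. Qed.

Lemma lambda_diag n k (B Ps : 'M[C]_(n, k)) (L : 'M[C]_k) :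
  \rank B = k -> ctmx Ps *m Ps = 1%:M -> psd L -> B = Ps *m L ->
  let U := spectralmx (ctmx B *m B) in
  L = ctmx U *m diag_mx (\row_i sv B i) *m U.
Proof.
move=> rk Po [Lh Lpsd] BE U.
case: (spec_facts B) => UU1 UU2 GE dE.
set d := spectral_diag _ in GE dE.
have GL : ctmx B *m B = L *m L.
  by rewrite BE ctmx_mul Lh -mulmxA (mulmxA (ctmx Ps)) Po mul1mx.
set K := U *m L *m ctmx U.
have KK : K *m K = diag_mx d.
  rewrite /K !mulmxA -(mulmxA _ _ U) UU2 mulmx1 -(mulmxA _ L L) -GL GE.
  by rewrite !mulmxA UU1 mul1mx -mulmxA UU1 mulmx1.
have Kpsd : forall v : 'cV_k, 0 <= (ctmx v *m K *m v) 0 0.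
  move=> v; have := Lpsd (ctmx U *m v).
  by rewrite ctmx_mul ctmxK /K !mulmxA.
have KE : K = diag_mx (\row_i sv B i).
  apply/matrixP => i j.
  set s := sv B j.
  have s0 : 0 < s by exact: sv_gt0.
  pose e : 'cV[C]_k := delta_mx j 0.
  pose w := K *m e - s *: e.
  have Kw : K *m w = - s *: w.
    rewrite /w mulmxBr mulmxA KK diag_delta -scalemxAr scalerBr scaleNr.
    by rewrite scaleNr opprK scalerA -expr2 /s sv_sq -/d addrC.
  have w0 : w = 0.
    apply: cv_norm_eq0; apply/eqP; rewrite eq_le ctmx_mul_diag_ge0 andbT.
    have := Kpsd w; rewrite -mulmxA Kw -scalemxAr mxE mulNr.
    by rewrite oppr_ge0 pmulr_rle0.
  have Ke : K *m e = s *: e by apply/eqP; rewrite -subr_eq0 -/w w0.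
  have := congr1 (fun M : 'cV_k => M i 0) Ke; rewrite /= mul_delta_entry => ->.
  by rewrite !mxE; case: (eqVneq i j) => [->|ne]; rewrite ?mulr1 ?mulr0 ?mulr1n ?mulr0n.
have -> : L = ctmx U *m K *m U.
  by rewrite /K !mulmxA UU2 mul1mx -mulmxA UU2 mulmx1.
by rewrite KE.
Qed.

Lemma tr_mul_diag k (A : 'M[C]_k) (d : 'rV[C]_k) :
  \tr (A *m diag_mx d) = \sum_i A i i * d 0 i.
Proof. by rewrite mul_mx_diag /mxtrace; apply: eq_bigr => i _; rewrite mxE. Qed.

Lemma smin_gt0 m k (X : 'M[C]_(m, k)) : (0 < k)%N -> \rank X = k -> 0 < smin X.
Proof.
move=> k0 rk; rewrite /smin; apply: (big_ind (fun x => 0 < x)).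
- apply: lt_le_trans (sv_gt0 (Ordinal k0) rk) (norm2_ge _ _).
- by move=> x y x0 y0; rewrite /Order.min; case: ifP.
- by move=> i _; exact: sv_gt0.
Qed.

Definition fsq m n (A : 'M[C]_(m, n)) := \tr (ctmx A *m A).

Lemma core n k (B Ps P : 'M[C]_(n, k)) (L : 'M[C]_k) :
  \rank B = k -> ctmx Ps *m Ps = 1%:M -> ctmx P *m P = 1%:M -> psd L ->
  B = Ps *m L ->
  smin B * fsq (P - Ps) <= 2 * (trnorm B - 'Re (\tr (ctmx P *m B))).
Proof.
move=> rk Po PPo Lpsd BE.
have LE := lambda_diag rk Po Lpsd BE.
case: (spec_facts B) => UU1 UU2 _ _.
set U := spectralmx _ in LE UU1 UU2.
set s := \row_i sv B i in LE.
pose X := P *m ctmx U; pose Y := Ps *m ctmx U; pose N := ctmx X *m Y.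
have XX : ctmx X *m X = 1%:M.
  by rewrite /X ctmx_mul ctmxK mulmxA -(mulmxA U) PPo mulmx1 UU1.
have YY : ctmx Y *m Y = 1%:M.
  by rewrite /Y ctmx_mul ctmxK mulmxA -(mulmxA U) Po mulmx1 UU1.
have trE : \tr (ctmx P *m B) = \sum_i N i i * sv B i.
  rewrite [in LHS]BE [in LHS]LE !mulmxA mxtrace_mulC !mulmxA tr_mul_diag.
  by apply: eq_bigr => i _; rewrite [s 0 i]mxE /N /X /Y ctmx_mul ctmxK !mulmxA.
have fE : fsq (P - Ps) = \tr (ctmx (X - Y) *m (X - Y)).
  rewrite /fsq /X /Y -mulmxBl ctmx_mul ctmxK.
  rewrite [RHS]mxtrace_mulC !mulmxA -(mulmxA (P - Ps)) UU2 mulmx1.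
  by rewrite [RHS]mxtrace_mulC.
have cE : forall i, (ctmx (X - Y) *m (X - Y)) i i = 2 * (1 - 'Re (N i i)).
  move=> i; rewrite ctmxB mulmxBl !mulmxBr XX YY.
  have -> : ctmx Y *m X = ctmx N by rewrite /N ctmx_mul ctmxK.
  rewrite !mxE eqxx ReE; set z := \sum_j _.
  rewrite /= ?mulr1n; set w := conjC z.
  rewrite mulrBr mulr1 mulrA mulrC mulrA mulVf ?pnatr_eq0 // mul1r.
  by rewrite opprB opprD addrA mulr2n; ring.
rewrite trE fE /mxtrace /trnorm.
under eq_bigr do rewrite cE.
have ReS : forall F : 'I_k -> C, 'Re (\sum_i F i) = \sum_i 'Re (F i).
  by move=> F; rewrite raddf_sum.
rewrite ReS.
under [X in _ - X]eq_bigr do rewrite ReMr ?sv_real //.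
rewrite mulr_sumr -sumrB mulr_sumr; apply: ler_sum => i _.
have -> : 2 * (sv B i - 'Re (N i i) * sv B i) = (2 * (1 - 'Re (N i i))) * sv B i by ring.
rewrite mulrC; apply: ler_wpM2l; last exact: smin_le.
by rewrite -cE ctmx_mul_diag_ge0.
Qed.

Lemma zid (V : zmodType) (a b c d : V) : a - (b - c) = (a - (b - d)) + (c - d).
Proof. by rewrite [in RHS]opprB addrACA [d - b - d]addrAC subrr add0r opprB addrA. Qed.

Lemma Zid n k (P Ps : 'M[C]_(n, k)) : ctmx P *m P = 1%:M -> ctmx Ps *m Ps = 1%:M ->
  let M := ctmx P *m Ps in let Z := Ps - P *m M in
  ctmx Z *m Z = 1%:M - ctmx M *m M /\
  ctmx (P - Ps) *m (P - Ps) = ctmx (1%:M - M) *m (1%:M - M) + ctmx Z *m Z.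
Proof.
move=> PP SS M Z.
have hM : ctmx Ps *m P = ctmx M by rewrite /M ctmx_mul ctmxK.
have Z1 : ctmx Z *m Z = 1%:M - ctmx M *m M.
  rewrite /Z ctmxB ctmx_mul mulmxBl !mulmxBr SS mulmxA hM.
  rewrite -!mulmxA -/M [ctmx P *m (P *m M)]mulmxA PP mul1mx.
  by rewrite subrr subr0.
split => //.
rewrite Z1 !ctmxB ctmx1 mulmxBl !mulmxBr PP SS hM -/M mulmx1 mulmxBl mul1mx.
set A := ctmx M; set D := A *m M.
by apply/matrixP => i j; rewrite !mxE; ring.
Qed.

Lemma sinE n k (P Ps : 'M[C]_(n, k)) : ctmx P *m P = 1%:M -> ctmx Ps *m Ps = 1%:M ->
  sinThetaF P Ps = sqrtC (fsq (Ps - P *m (ctmx P *m Ps))).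
Proof.
move=> PP SS; case: (Zid PP SS) => Z1 _.
rewrite /sinThetaF /fsq Z1 sumrB sum_sv_sq raddfB /= mxtrace1 sumr_const card_ord.
by [].
Qed.

Lemma fZL m n k (B Ps : 'M[C]_(n, k)) (L : 'M[C]_k) (Z : 'M[C]_(m, k)) :
  ctmx Ps *m Ps = 1%:M -> psd L -> B = Ps *m L ->
  fsq (Z *m L) <= norm2 B ^+ 2 * fsq Z.
Proof.
move=> Po [Lh _] BE.
have GL : ctmx B *m B = L *m L.
  by rewrite BE ctmx_mul Lh -mulmxA (mulmxA (ctmx Ps)) Po mul1mx.
case: (spec_facts B) => UU1 UU2 GE _.
set U := spectralmx _ in UU1 UU2 GE; set d := spectral_diag _ in GE.
have [V VE] : exists V, V = Z *m ctmx U by eexists.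
have VV : U *m ctmx Z *m Z *m ctmx U = ctmx V *m V.
  by rewrite VE ctmx_mul ctmxK !mulmxA.
have f1 : fsq (Z *m L) = \sum_i (ctmx V *m V) i i * d 0 i.
  rewrite /fsq ctmx_mul Lh mxtrace_mulC !mulmxA -(mulmxA _ L L) -GL GE.
  rewrite !mulmxA mxtrace_mulC !mulmxA mxtrace_mulC !mulmxA.
  by rewrite VV tr_mul_diag.
have f2 : fsq Z = \sum_i (ctmx V *m V) i i.
  rewrite /fsq -[RHS]/(\tr (ctmx V *m V)) -VV [RHS]mxtrace_mulC !mulmxA UU2 mul1mx.
  by [].
rewrite f1 f2 mulr_sumr; apply: ler_sum => i _.
rewrite mulrC; apply: ler_wpM2r; first exact: ctmx_mul_diag_ge0.
rewrite /d -sv_sq !expr2; apply: ler_pM; rewrite ?sv_ge0 ?norm2_ge //.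
Qed.

End H.

Close Scope sesquilinear_scope.
Unset Implicit Arguments.

Theorem theorem4p3 (C : numClosedFieldType) (n k : nat)
  (B Pstar P : 'M[C]_(n, k)) :
  (k <= n)%N -> \rank B = k ->
  polar_factor B Pstar ->
  orthonormal_cols P ->
  let eta := trnorm B - 'Re (\tr (ctmx P *m B)) in
  let eps := sqrtC (2 * eta / smin B) in
  [/\ frob (B - P *m (ctmx P *m B)) / norm2 B <= sinThetaF P Pstar,
      sinThetaF P Pstar <= eps,
      (hpd (ctmx P *m B) ->
         frob (P - Pstar) <=
         (1 + 2 * norm2 B / (smin B + smin (ctmx P *m B))) * eps)
    & (same_range P Pstar -> frob (P - Pstar) <= eps)].
Proof.
move=> kn rk [Po [L [Lpsd BE]]] PPo eta eps.
rewrite /orthonormal_cols in Po PPo.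
set M := ctmx P *m Pstar; set Z := Pstar - P *m M.
have BZ : B - P *m (ctmx P *m B) = Z *m L.
  by rewrite /Z mulmxBl BE /M !mulmxA.
have fZ0 : 0 <= fsq Z by exact: ftr_ge0.
have sinF : sinThetaF P Pstar = sqrtC (fsq Z) by exact: sinE.
have core' : fsq (P - Pstar) <= 2 * eta / smin B.
  have [k0|kpos] := posnP k.
    subst k; rewrite /fsq /mxtrace big_ord0 /smin /norm2 !big_ord0 invr0 mulr0.
    by [].
  rewrite ler_pdivlMr ?smin_gt0 // mulrC; exact: core rk Po PPo Lpsd BE.
have fle : fsq Z <= fsq (P - Pstar).
  case: (Zid PPo Po) => _; rewrite -/M -/Z => E.
  by rewrite /fsq E mxtraceD lerDr ftr_ge0.
have Pge : 0 <= fsq (P - Pstar) by exact: ftr_ge0.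
have Rge : 0 <= 2 * eta / smin B by exact: le_trans Pge core'.
have epsge : 0 <= eps by rewrite /eps sqrtC_ge0.
have main : frob (P - Pstar) <= eps.
  by rewrite /frob /eps ler_sqrtC ?nnegrE.
split => //.
- rewrite BZ sinF.
  have [n0|npos] := eqVneq (norm2 B) 0.
    by rewrite n0 invr0 mulr0 sqrtC_ge0.
  have n2p : 0 < norm2 B by rewrite lt_def npos norm2_ge0.
  have n20 := ltW n2p.
  rewrite ler_pdivrMr // -[X in _ <= _ * X](sqrCK n20) -sqrtCM ?nnegrE ?exprn_ge0 //.
  rewrite /frob ler_sqrtC ?nnegrE ?mulr_ge0 ?exprn_ge0 ?ftr_ge0 //.
  by rewrite mulrC; exact: fZL Po Lpsd BE.
- by rewrite sinF /eps ler_sqrtC ?nnegrE //; exact: le_trans fle core'.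
- move=> _; apply: le_trans main _; apply: ler_peMl => //.
  rewrite lerDl divr_ge0 ?addr_ge0 ?smin_ge0 ?mulr_ge0 ?norm2_ge0 //.
Qed.
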